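(* Let $B=R(t,\sigma,H,J)$ and $B'=R'(t',\sigma',H',J')$ be BR algebras, and let $\phi:R\to R'$ be a $\Bbbk$-algebra homomorphism with $\phi(H)\subseteq H'$, $\phi(J)\subseteq J'$ and $\phi\circ\sigma=\sigma'\circ\phi$. Then for each $\gamma\in\Bbbk^\times$ there is a graded algebra homomorphism $\Phi_\gamma:B\to B'$ with $\Phi_\gamma(at^n)=\gamma^n\phi(a)(t')^n$ for all $n\in\mathbb Z$ and $a\in I^{(n)}$ (in particular $\Phi_\gamma$ restricts to $\phi$ on $R=B_0$). Moreover: (1) if $\Phi_\gamma$ is injective (resp. surjective), then $\phi$ is injective (resp. surjective); (2) if $R'$ is a domain and $\phi$ is injective, then $\Phi_\gamma$ is injective; (3) if $\phi(H)=H'$, $\phi(J)=J'$ and $\phi$ is surjective, then $\Phi_\gamma$ is surjective.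
   Context: $\Bbbk$ is a field; all algebras are associative unital $\Bbbk$-algebras. For an algebra $R$ and $\sigma\in\operatorname{Aut}_\Bbbk(R)$, $R[t,t^{-1};\sigma]$ is the skew Laurent ring: generated over $R$ by $t,t^{-1}$ with $tt^{-1}=t^{-1}t=1$ and $t^{\pm1}r=\sigma^{\pm1}(r)t^{\pm1}$ for $r\in R$. Given two-sided ideals $H,J$ of $R$, set $I^{(0)}=R$, $I^{(n)}=J\sigma(J)\cdots\sigma^{n-1}(J)$ for $n\ge1$, and $I^{(n)}=\sigma^{-1}(H)\sigma^{-2}(H)\cdots\sigma^{n}(H)$ for $n\le-1$; it is assumed throughout that $I^{(n)}\neq0$ for all $n\in\mathbb Z$. The Bell–Rogalski (BR) algebra is $R(t,\sigma,H,J)=\bigoplus_{n\in\mathbb Z}I^{(n)}t^n\subseteq R[t,t^{-1};\sigma]$, graded by $\deg(I^{(n)}t^n)=n$. For $B'$ the analogous notation $I'^{(n)}$ is used with $R',\sigma',H',J',t'$. *)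

(* Defs.v *)
From HB Require Import structures.
From mathcomp Require Import all_boot all_order all_algebra.
From mathcomp Require Import finmap.
Set Implicit Arguments. Unset Strict Implicit. Unset Printing Implicit Defensive.
Import Order.TTheory GRing.Theory Num.Theory.
Local Open Scope ring_scope.


Definition is_ideal (R : nzRingType) (I : R -> Prop) : Prop :=
  [/\ I 0, (forall x y, I x -> I y -> I (x + y)) &
      (forall r x, I x -> I (r * x) /\ I (x * r))].

(* noncommutative domain: no zero divisors (1 != 0 holds in a nzRing) *)
Definition is_domain (R : nzRingType) : Prop :=
  forall x y : R, x * y = 0 -> x = 0 \/ y = 0.

Definition img (R S : Type) (f : R -> S) (P : R -> Prop) : S -> Prop :=
  fun y => exists x, P x /\ y = f x.

Definition idealprod (R : nzRingType) (P Q : R -> Prop) : R -> Prop :=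
  fun x => exists s : seq (R * R),
    (forall p, p \in s -> P p.1 /\ Q p.2) /\ x = \sum_(p <- s) p.1 * p.2.

Fixpoint prodI (R : nzRingType) (P : R -> Prop) (Qs : seq (R -> Prop)) : R -> Prop :=
  match Qs with
  | [::] => P
  | Q :: Qs' => idealprod P (prodI Q Qs')
  end.

Definition spow (R : Type) (s si : R -> R) (n : int) : R -> R :=
  match n with
  | Posz m => iter m s
  | Negz m => iter m.+1 si
  end.

(* I^(n):  I^(0) = R,  I^(n) = J s(J) ... s^(n-1)(J)  (n >= 1),
   I^(n) = s^-1(H) s^-2(H) ... s^n(H)  (n <= -1)   *)
Definition Ipow (R : nzRingType) (s si : R -> R) (H J : R -> Prop) (n : int)
  : R -> Prop :=
  match n with
  | Posz 0 => fun _ => True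
  | Posz m.+1 => prodI J [seq img (iter k s) J | k <- iota 1 m]
  | Negz m => prodI (img si H) [seq img (iter k si) H | k <- iota 2 m]
  end.

(* Elements of the skew Laurent ring R[t,t^-1;s]: finitely supported
   coefficient functions  f : Z -> R  standing for  \sum_n f(n) t^n. *)
Notation SL R := {fsfun int -> R with 0}.

Definition SLadd (R : nzRingType) (f g : SL R) : SL R :=
  [fsfun n in (finsupp f `|` finsupp g)%fset => f n + g n].

Definition SLscale (k : fieldType) (R : algType k) (c : k) (f : SL R) : SL R :=
  [fsfun n in finsupp f => c *: f n].

(* (a t^i)(b t^j) = a s^i(b) t^(i+j) *)
Definition SLmul (R : nzRingType) (s si : R -> R) (f g : SL R) : SL R :=
  [fsfun n in [fset (i + j)%R | i in finsupp f, j in finsupp g]%fset =>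
     \sum_(i <- finsupp f) f i * spow s si i (g (n - i))].

Definition SLmono (R : nzRingType) (n : int) (a : R) : SL R :=
  [fsfun m in [fset n]%fset => if m == n then a else 0].

Definition SLone (R : nzRingType) : SL R := @SLmono R 0 1.

(* membership in the BR algebra R(t, s, H, J) = \bigoplus_n I^(n) t^n *)
Definition inBR (R : nzRingType) (s si : R -> R) (H J : R -> Prop) (f : SL R)
  : Prop := forall n : int, Ipow s si H J n (f n).

Definition BR_data (k : fieldType) (R : algType k) (s : {lrmorphism R -> R})
  (si : R -> R) (H J : R -> Prop) : Prop :=
  [/\ cancel s si, cancel si s, is_ideal H, is_ideal J &
      forall n : int, exists x, Ipow s si H J n x /\ x <> 0].

(* Main.v *)
Require Import Defs.
From HB Require Import structures.
From mathcomp Require Import all_boot all_order all_algebra.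
From mathcomp Require Import finmap.
Set Implicit Arguments. Unset Strict Implicit. Unset Printing Implicit Defensive.
Import Order.TTheory GRing.Theory Num.Theory.
Local Open Scope ring_scope.

Lemma si0 (k : fieldType) (R : algType k) (s : {lrmorphism R -> R}) (si : R -> R) :
  cancel s si -> si 0 = 0.
Proof. by move=> c; rewrite -{1}(rmorph0 s) c. Qed.

Lemma siM (k : fieldType) (R : algType k) (s : {lrmorphism R -> R}) (si : R -> R) :
  cancel s si -> cancel si s -> forall a b, si (a * b) = si a * si b.
Proof. by move=> c1 c2 a b; rewrite -{1}(c2 a) -{1}(c2 b) -rmorphM c1. Qed.

Lemma siD (k : fieldType) (R : algType k) (s : {lrmorphism R -> R}) (si : R -> R) :
  cancel s si -> cancel si s -> forall a b, si (a + b) = si a + si b.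
Proof. by move=> c1 c2 a b; rewrite -{1}(c2 a) -{1}(c2 b) -rmorphD c1. Qed.

Lemma siZ (k : fieldType) (R : algType k) (s : {lrmorphism R -> R}) (si : R -> R) :
  cancel s si -> cancel si s -> forall (c : k) a, si (c *: a) = c *: si a.
Proof. by move=> c1 c2 c a; rewrite -{1}(c2 a) -linearZ c1. Qed.

Lemma spow0 (k : fieldType) (R : algType k) (s : {lrmorphism R -> R}) (si : R -> R) :
  cancel s si -> forall n, spow s si n 0 = 0.
Proof.
move=> c [m|m] /=.
  by elim: m => //= m ->; rewrite rmorph0.
by elim: m => /= [|m ->]; exact: si0 c.
Qed.

Lemma spowZ (k : fieldType) (R : algType k) (s : {lrmorphism R -> R}) (si : R -> R) :
  cancel s si -> cancel si s -> forall n (c : k) a, spow s si n (c *: a) = c *: spow s si n a.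
Proof.
move=> c1 c2 [m|m] c a /=.
  by elim: m => //= m ->; rewrite linearZ.
by elim: m => /= [|m ->]; exact: siZ.
Qed.

Lemma phi_si (k : fieldType) (R R' : algType k) (s : {lrmorphism R -> R}) (si : R -> R)
  (s' : {lrmorphism R' -> R'}) (si' : R' -> R') (phi : {lrmorphism R -> R'}) :
  cancel s si -> cancel si s -> cancel s' si' -> cancel si' s' ->
  (forall x, phi (s x) = s' (phi x)) -> forall x, phi (si x) = si' (phi x).
Proof. by move=> c1 c2 c1' c2' h x; rewrite -[LHS]c1' -h c2. Qed.

Lemma phi_iter (A B : Type) (f : A -> A) (g : B -> B) (p : A -> B) :
  (forall x, p (f x) = g (p x)) -> forall m x, p (iter m f x) = iter m g (p x).
Proof. by move=> h; elim=> //= m IH x; rewrite h IH. Qed.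

Lemma phi_spow (k : fieldType) (R R' : algType k) (s : {lrmorphism R -> R}) (si : R -> R)
  (s' : {lrmorphism R' -> R'}) (si' : R' -> R') (phi : {lrmorphism R -> R'}) :
  cancel s si -> cancel si s -> cancel s' si' -> cancel si' s' ->
  (forall x, phi (s x) = s' (phi x)) -> forall n x, phi (spow s si n x) = spow s' si' n (phi x).
Proof.
move=> c1 c2 c1' c2' h [m|m] x /=; first exact: (phi_iter h).
have hh := phi_si c1 c2 c1' c2' h.
by rewrite hh (phi_iter hh).

Qed.

Lemma idealprod0 (R : nzRingType) (P Q : R -> Prop) : idealprod P Q 0.
Proof. by exists [::]; split => //; rewrite big_nil. Qed.

Lemma idealprodD (R : nzRingType) (P Q : R -> Prop) x y :
  idealprod P Q x -> idealprod P Q y -> idealprod P Q (x + y).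
Proof.
move=> [s1 [h1 ->]] [s2 [h2 ->]]; exists (s1 ++ s2); split; last by rewrite big_cat.
by move=> p; rewrite mem_cat => /orP[/h1|/h2].
Qed.

Lemma idealprodM (R : nzRingType) (P Q : R -> Prop) p q :
  P p -> Q q -> idealprod P Q (p * q).
Proof.
move=> hp hq; exists [:: (p, q)]; split; last by rewrite big_seq1.
by move=> x; rewrite inE => /eqP ->.
Qed.

Lemma prodI0 (R : nzRingType) (P : R -> Prop) Qs : P 0 -> prodI P Qs 0.
Proof. by case: Qs => //= Q Qs _; exact: idealprod0. Qed.

Lemma prodIZ (k : fieldType) (R : algType k) (P : R -> Prop) Qs (c : k) x :
  (forall x, P x -> P (c *: x)) -> prodI P Qs x -> prodI P Qs (c *: x).
Proof.
case: Qs => [|Q Qs] /=; first by apply.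
move=> hP [s [hs ->]]; exists [seq (c *: p.1, p.2) | p <- s]; split.
  by move=> p /mapP [q /hs [h1 h2] ->]; split => //; apply: hP.
by rewrite big_map scaler_sumr; apply: eq_bigr => p _; rewrite scalerAl.
Qed.

Lemma prodI_map (k : fieldType) (R R' : algType k) (phi : {lrmorphism R -> R'})
  (F : nat -> R -> Prop) (F' : nat -> R' -> Prop) :
  (forall n x, F n x -> F' n (phi x)) ->
  forall l (P : R -> Prop) (P' : R' -> Prop), (forall x, P x -> P' (phi x)) ->
  forall x, prodI P (map F l) x -> prodI P' (map F' l) (phi x).
Proof.
move=> hF; elim=> [|a l IH] P P' hP x //=; first by apply: hP.
move=> [s [hs ->]]; exists [seq (phi p.1, phi p.2) | p <- s]; split.
  move=> p /mapP [q /hs [h1 h2] ->]; split; first exact: hP.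
  exact: (IH (F a) (F' a) (hF a)).
by rewrite big_map rmorph_sum; apply: eq_bigr => p _; rewrite rmorphM.
Qed.

Lemma prodI_surj (k : fieldType) (R R' : algType k) (phi : {lrmorphism R -> R'})
  (F : nat -> R -> Prop) (F' : nat -> R' -> Prop) :
  (forall n y, F' n y -> exists2 x, F n x & phi x = y) ->
  forall l (P : R -> Prop) (P' : R' -> Prop),
  (forall y, P' y -> exists2 x, P x & phi x = y) ->
  forall y, prodI P' (map F' l) y -> exists2 x, prodI P (map F l) x & phi x = y.
Proof.
move=> hF; elim=> [|a l IH] P P' hP y //=; first by apply: hP.
move=> [s [hs ->]]; elim: s hs => [|[p q] s IHs] hs.
  by exists 0; [exact: idealprod0 | rewrite big_nil rmorph0].
have [] := hs (p, q); first by rewrite inE eqxx.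
move=> /= /hP [a1 ha1 e1] /(IH (F a) (F' a) (hF a)) [b1 hb1 e2].
have [x hx ex] : exists2 x, idealprod P (prodI (F a) [seq F i | i <- l]) x & phi x = \sum_(p <- s) p.1 * p.2.
  by apply: IHs => z hz; apply: hs; rewrite inE hz orbT.
exists (a1 * b1 + x); first by apply: idealprodD => //; apply: idealprodM.
by rewrite big_cons rmorphD rmorphM /= -e1 -e2 -ex.
Qed.

Lemma idealZ (k : fieldType) (R : algType k) (I : R -> Prop) :
  is_ideal I -> forall (c : k) x, I x -> I (c *: x).
Proof. by case=> _ _ hM c x /(hM c%:A) [+ _]; rewrite mulr_algl. Qed.

Lemma Ipow0 (k : fieldType) (R : algType k) (s : {lrmorphism R -> R}) (si : R -> R)
  (H J : R -> Prop) : cancel s si -> is_ideal H -> is_ideal J ->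
  forall n, Ipow s si H J n 0.
Proof.
move=> c [H0 _ _] [J0 _ _] [[|m]|m] //=; apply: prodI0 => //.
by exists 0; rewrite (si0 c).
Qed.

Lemma IpowZ (k : fieldType) (R : algType k) (s : {lrmorphism R -> R}) (si : R -> R)
  (H J : R -> Prop) : cancel s si -> cancel si s -> is_ideal H -> is_ideal J ->
  forall n (c : k) x, Ipow s si H J n x -> Ipow s si H J n (c *: x).
Proof.
move=> c1 c2 iH iJ [[|m]|m] c x //=; apply: prodIZ.
  exact: idealZ.
move=> y [h [hh ->]]; exists (c *: h); split; first exact: idealZ.
by rewrite (siZ c1 c2).
Qed.

Lemma Ipow_map (k : fieldType) (R R' : algType k) (s : {lrmorphism R -> R}) (si : R -> R)
  (H J : R -> Prop)
  (s' : {lrmorphism R' -> R'}) (si' : R' -> R') (H' J' : R' -> Prop)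
  (phi : {lrmorphism R -> R'}) :
  cancel s si -> cancel si s -> cancel s' si' -> cancel si' s' ->
  (forall x, H x -> H' (phi x)) -> (forall x, J x -> J' (phi x)) ->
  (forall x, phi (s x) = s' (phi x)) ->
  forall n x, Ipow s si H J n x -> Ipow s' si' H' J' n (phi x).
Proof.
move=> c1 c2 c1' c2' hH hJ h.
have hsi := phi_si c1 c2 c1' c2' h.
move=> [[|m]|m] x //=.
  apply: prodI_map => //; move=> n y [z [hz ->]]; exists (phi z); split; first exact: hJ.
  exact: phi_iter.
apply: prodI_map.
  move=> n y [z [hz ->]]; exists (phi z); split; first exact: hH.
  exact: phi_iter.
move=> y [z [hz ->]]; exists (phi z); split; first exact: hH.
exact: hsi.
Qed.

Lemma Ipow_surj (k : fieldType) (R R' : algType k) (s : {lrmorphism R -> R}) (si : R -> R)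
  (H J : R -> Prop)
  (s' : {lrmorphism R' -> R'}) (si' : R' -> R') (H' J' : R' -> Prop)
  (phi : {lrmorphism R -> R'}) :
  cancel s si -> cancel si s -> cancel s' si' -> cancel si' s' ->
  (forall x, phi (s x) = s' (phi x)) ->
  (forall y, H' y <-> exists2 x, H x & phi x = y) ->
  (forall y, J' y <-> exists2 x, J x & phi x = y) ->
  (forall y : R', exists x : R, phi x = y) ->
  forall n y, Ipow s' si' H' J' n y -> exists2 x, Ipow s si H J n x & phi x = y.
Proof.
move=> c1 c2 c1' c2' h eH eJ surj.
have hsi := phi_si c1 c2 c1' c2' h.
move=> [[|m]|m] y /=.
- by move=> _; have [x ex] := surj y; exists x.
- apply: prodI_surj => [n z [w [/eJ [x hx <-] ->]]|z /eJ //].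
  by exists (iter n s x); [exists x | exact: phi_iter].
- apply: prodI_surj => [n z [w [/eH [x hx <-] ->]]|z [w [/eH [x hx <-] ->]]].
    by exists (iter n si x); [exists x | exact: phi_iter].
  by exists (si x); [exists x | exact: hsi].
Qed.

Definition PhiF (k : fieldType) (R R' : algType k) (phi : {lrmorphism R -> R'})
  (gamma : k) (f : SL R) : SL R' :=
  [fsfun n in finsupp f => gamma ^ n *: phi (f n)].

Lemma PhiE (k : fieldType) (R R' : algType k) (phi : {lrmorphism R -> R'})
  (gamma : k) f n : PhiF phi gamma f n = gamma ^ n *: phi (f n).
Proof.
rewrite fsfunE; case: ifP => // /negbT /fsfun_dflt -> /=.
by rewrite rmorph0 scaler0.
Qed.

Lemma SLaddE (R : nzRingType) (f g : SL R) n : SLadd f g n = f n + g n.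
Proof.
rewrite fsfunE; case: ifP => //; rewrite in_fsetU => /negbT.
by rewrite negb_or => /andP [/fsfun_dflt -> /fsfun_dflt ->] /=; rewrite addr0.
Qed.

Lemma SLscaleE (k : fieldType) (R : algType k) (c : k) (f : SL R) n :
  SLscale c f n = c *: f n.
Proof.
by rewrite fsfunE; case: ifP => // /negbT /fsfun_dflt -> /=; rewrite scaler0.
Qed.

Lemma SLmonoE (R : nzRingType) n (a : R) m :
  SLmono n a m = if m == n then a else 0.
Proof.
by rewrite fsfunE in_fset1; case: (m == n).
Qed.

Lemma SLmulE (k : fieldType) (R : algType k) (s : {lrmorphism R -> R}) (si : R -> R)
  (f g : SL R) n : cancel s si ->
  SLmul s si f g n = \sum_(i <- finsupp f) f i * spow s si i (g (n - i)).
Proof.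
move=> c; rewrite fsfunE; case: ifP => // /negbT hn.
rewrite big1_seq // => i /andP [_ hi].
case: (boolP (n - i \in finsupp g)) => hg.
  case/negP: hn; apply/imfset2P; exists i => //; exists (n - i) => //.
  by rewrite addrCA subrr addr0.
by rewrite (fsfun_dflt hg) /= spow0 // mulr0.
Qed.

Lemma inBR_mono (k : fieldType) (R : algType k) (s : {lrmorphism R -> R}) (si : R -> R)
  (H J : R -> Prop) : cancel s si -> is_ideal H -> is_ideal J ->
  forall n a, Ipow s si H J n a -> inBR s si H J (SLmono n a).
Proof.
move=> c iH iJ n a ha m; rewrite SLmonoE; case: eqP => [->//|_]; exact: Ipow0.
Qed.

From Stdlib Require Import ClassicalEpsilon.

Theorem proposition2p10 (k : fieldType) (R R' : algType k)
  (s : {lrmorphism R -> R}) (si : R -> R) (H J : R -> Prop)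
  (s' : {lrmorphism R' -> R'}) (si' : R' -> R') (H' J' : R' -> Prop)
  (hB : BR_data s si H J) (hB' : BR_data s' si' H' J')
  (phi : {lrmorphism R -> R'})
  (hH : forall x, H x -> H' (phi x)) (hJ : forall x, J x -> J' (phi x))
  (hcomm : forall x, phi (s x) = s' (phi x))
  (gamma : k) (hgamma : gamma != 0) :
  exists Phi : SL R -> SL R',
    (* Phi is a graded k-algebra homomorphism B -> B' *)
    [/\ (forall f, inBR s si H J f -> inBR s' si' H' J' (Phi f)) /\
        (forall f g, inBR s si H J f -> inBR s si H J g ->
           Phi (SLadd f g) = SLadd (Phi f) (Phi g)),
        (forall (c : k) f, inBR s si H J f ->
           Phi (SLscale c f) = SLscale c (Phi f)),
        (forall f g, inBR s si H J f -> inBR s si H J g ->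
           Phi (SLmul s si f g) = SLmul s' si' (Phi f) (Phi g)),
        Phi (@SLone R) = @SLone R' &
        (* graded *)
        (forall (n : int) f, inBR s si H J f ->
           (forall m, m != n -> f m = 0) ->
           (forall m, m != n -> Phi f m = 0))]
    (* Phi (a t^n) = gamma^n phi(a) t'^n *)
    /\ (forall (n : int) (a : R), Ipow s si H J n a ->
          Phi (SLmono n a) = SLmono n (gamma ^ n *: phi a))
    (* (1) *)
    /\ ((forall f g, inBR s si H J f -> inBR s si H J g -> Phi f = Phi g -> f = g)
          -> injective phi)
    /\ ((forall f', inBR s' si' H' J' f' -> exists2 f, inBR s si H J f & Phi f = f')
          -> forall y : R', exists x : R, phi x = y)
    (* (2) *)
    /\ (is_domain R' -> injective phi ->
          forall f g, inBR s si H J f -> inBR s si H J g -> Phi f = Phi g -> f = g)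
    (* (3) *)
    /\ ((forall y, H' y <-> exists2 x, H x & phi x = y) ->
        (forall y, J' y <-> exists2 x, J x & phi x = y) ->
        (forall y : R', exists x : R, phi x = y) ->
          forall f', inBR s' si' H' J' f' -> exists2 f, inBR s si H J f & Phi f = f').
Proof.
case: hB => c1 c2 iH iJ _; case: hB' => c1' c2' iH' iJ' _.
have PE := PhiE phi gamma.
have monoE : forall n a, PhiF phi gamma (SLmono n a) = SLmono n (gamma ^ n *: phi a).
  move=> n a; apply/fsfunP => m; rewrite PE !SLmonoE.
  by case: eqP => [->|_] //; rewrite rmorph0 scaler0.
have in0 : forall x, inBR s si H J (SLmono 0 x).
  by move=> x; apply: inBR_mono.
have in0' : forall x, inBR s' si' H' J' (SLmono 0 x).
  by move=> x; apply: inBR_mono.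
exists (PhiF phi gamma); split; [split; [split|..]|split; [|split; [|split; [|split]]]].
- move=> f hf n; rewrite PE; apply: IpowZ => //.
  exact: (Ipow_map c1 c2 c1' c2' hH hJ hcomm).
- by move=> f g _ _; apply/fsfunP => n; rewrite PE !SLaddE !PE rmorphD scalerDr.
- move=> c f _; apply/fsfunP => n; rewrite PE !SLscaleE PE linearZ /=.
  by rewrite !scalerA mulrC.
- move=> f g _ _; apply/fsfunP => n; rewrite PE !SLmulE // rmorph_sum scaler_sumr.
  have sub : (finsupp (PhiF phi gamma f) `<=` finsupp f)%fset.
    apply/fsubsetP => i; rewrite !mem_finsupp PE; apply: contra_neq => /= ->.
    by rewrite rmorph0 scaler0.
  rewrite [RHS](big_fset_incl _ sub); last first.
    move=> i _; rewrite mem_finsupp negbK => /eqP -> /=; by rewrite mul0r.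
  apply: eq_bigr => i _; rewrite !PE (spowZ c1' c2') rmorphM -(phi_spow c1 c2 c1' c2' hcomm).
  by rewrite -scalerAl !scalerAr scalerA -expfzDr // addrCA subrr addr0.
- by rewrite /SLone monoE expr0z scale1r; congr SLmono; apply: rmorph1.
- by move=> n f _ hf m hm; rewrite PE hf // rmorph0 scaler0.
- by move=> n a _; exact: monoE.
- move=> hinj x y e.
  have := hinj _ _ (in0 x) (in0 y); rewrite !monoE e => /(_ erefl).
  by move/(congr1 (fun h : SL R => h 0)); rewrite !SLmonoE eqxx.
- move=> hs y; have [f _ e] := hs _ (in0' y); exists (f 0).
  by move/(congr1 (fun h : SL R' => h 0)): e; rewrite PE SLmonoE eqxx expr0z scale1r.
- move=> _ inj f g _ _ e; apply/fsfunP => n; apply: inj.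
  move/fsfunP: e => /(_ n); rewrite !PE => /(congr1 (fun v => (gamma ^ n)^-1 *: v)).
  by rewrite !scalerA mulVf ?expfz_neq0 // !scale1r.
- move=> eH eJ surj f' hf'.
  have hpre : forall n, exists x, Ipow s si H J n x /\ phi x = gamma ^ (- n) *: f' n.
    move=> n; have [x hx ex] := Ipow_surj c1 c2 c1' c2' hcomm eH eJ surj
       (IpowZ c1' c2' iH' iJ' (gamma ^ (- n)) (hf' n)).
    by exists x.
  pose F n := proj1_sig (constructive_indefinite_description _ (hpre n)).
  have hF : forall n, Ipow s si H J n (F n) /\ phi (F n) = gamma ^ (- n) *: f' n.
    by move=> n; rewrite /F; case: constructive_indefinite_description.
  exists ([fsfun n in finsupp f' => F n] : SL R).
    move=> n; rewrite fsfunE; case: ifP => _; first by case: (hF n).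
    exact: Ipow0.
  apply/fsfunP => n; rewrite PE fsfunE; case: ifP => hn.
    by case: (hF n) => _ ->; rewrite scalerA -expfzDr // subrr expr0z scale1r.
  by rewrite rmorph0 scaler0 (fsfun_dflt (negbT hn)).
Qed.
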